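(* Let $\{\lambda_n\}_{n=0}^\infty$ be a non-trivial non-negative (classical) multiplier sequence and let $T$ be the linear operator on $\mathbb{R}[x]$ with $T(H_n)=\lambda_nH_n$ for all $n$, so that $G_T(x,y)=e^{y^2/4}\sum_{k\ge0}\frac{\lambda_kH_k(x)(-y)^k}{2^kk!}$. Then $G_T(-x,y)\notin\mathscr{L\text{-}P}_2(\mathbb{R})$.
   Context: The Hermite polynomials are defined by $\exp(2xt-t^2)=\sum_{n\ge0}\frac{H_n(x)}{n!}t^n$. A multiplier sequence is a real sequence $\{\lambda_n\}$ such that $x^n\mapsto\lambda_nx^n$ maps real-rooted polynomials to real-rooted polynomials. A sequence is trivial if there is $k$ with $\lambda_n=0$ for all $n\notin\{k,k+1\}$. The symbol of a linear operator $T$ on $\mathbb{R}[x]$ is $G_T(x,y)=\sum_{n\ge0}\frac{(-1)^nT(x^n)}{n!}y^n$. A polynomial in $\mathbb{C}[x,y]$ is stable if it has no zero with $\operatorname{Im}x>0,\operatorname{Im}y>0$; $\mathscr{L\text{-}P}_2(\mathbb{R})$ is the class of real entire functions of two variables that are limits, uniformly on compact subsets of $\mathbb{C}^2$, of real stable polynomials. *)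

(* Defs.v *)
From Stdlib Require Import Reals List Arith Factorial.
Open Scope R_scope.

Record Cpx := mkC { Re : R; Im : R }.
Definition C0 : Cpx := mkC 0 0.
Definition C1 : Cpx := mkC 1 0.
Definition CR (r : R) : Cpx := mkC r 0.
Definition Cadd (z w : Cpx) : Cpx := mkC (Re z + Re w) (Im z + Im w).
Definition Copp (z : Cpx) : Cpx := mkC (- Re z) (- Im z).
Definition Csub (z w : Cpx) : Cpx := Cadd z (Copp w).
Definition Cmul (z w : Cpx) : Cpx :=
  mkC (Re z * Re w - Im z * Im w) (Re z * Im w + Im z * Re w).
Fixpoint Cpow (z : Cpx) (n : nat) : Cpx :=
  match n with O => C1 | S k => Cmul z (Cpow z k) end.
Definition Cnorm (z : Cpx) : R := sqrt (Re z * Re z + Im z * Im z).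
Definition Cexp (z : Cpx) : Cpx :=
  mkC (exp (Re z) * cos (Im z)) (exp (Re z) * sin (Im z)).

Fixpoint Csum (f : nat -> Cpx) (n : nat) : Cpx :=
  match n with O => C0 | S k => Cadd (Csum f k) (f k) end.

Definition Cseries_cv (a : nat -> Cpx) (s : Cpx) : Prop :=
  forall eps, 0 < eps -> exists N, forall n, (N <= n)%nat ->
    Cnorm (Csub (Csum a n) s) < eps.

(** * Real univariate polynomials, as coefficient lists [a0; a1; ...] *)
Fixpoint peval (p : list R) (z : Cpx) : Cpx :=
  match p with nil => C0 | a :: q => Cadd (CR a) (Cmul z (peval q z)) end.

(** real-rooted: all zeros real (the zero polynomial counts as real-rooted) *)
Definition real_rooted (p : list R) : Prop :=
  (forall a, In a p -> a = 0) \/ (forall z, peval p z = C0 -> Im z = 0).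

(** the diagonal operator x^n |-> lam n x^n applied to a coefficient list *)
Fixpoint apply_seq_from (lam : nat -> R) (n : nat) (p : list R) : list R :=
  match p with nil => nil | a :: q => (lam n * a) :: apply_seq_from lam (S n) q end.
Definition apply_seq (lam : nat -> R) (p : list R) := apply_seq_from lam O p.

Definition multiplier_sequence (lam : nat -> R) : Prop :=
  forall p, real_rooted p -> real_rooted (apply_seq lam p).

Definition trivial_seq (lam : nat -> R) : Prop :=
  exists k, forall n, n <> k -> n <> S k -> lam n = 0.

(** * Hermite polynomials:  exp(2xt - t^2) = sum_n H_n(x) t^n / n!, i.e.
    H_n(x) = sum_{j <= n/2} (-1)^j n! / (j! (n-2j)!) (2x)^(n-2j)
    (coefficient of t^n in exp(2xt) * exp(-t^2), times n!). *)
Definition hermite (n : nat) (x : Cpx) : Cpx :=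
  Csum (fun j => if Nat.leb (2 * j) n then
          Cmul (CR ((-1) ^ j * INR (fact n) / (INR (fact j) * INR (fact (n - 2 * j)))))
               (Cpow (Cmul (CR 2) x) (n - 2 * j))
        else C0) (S n).

(** * Bivariate real polynomials: degree bound d, coefficients c i j of x^i y^j *)
Definition biv_eval (d : nat) (c : nat -> nat -> R) (x y : Cpx) : Cpx :=
  Csum (fun i => Csum (fun j => Cmul (CR (c i j)) (Cmul (Cpow x i) (Cpow y j))) (S d)) (S d).

Definition real_stable (d : nat) (c : nat -> nat -> R) : Prop :=
  forall x y, 0 < Im x -> 0 < Im y -> biv_eval d c x y <> C0.

(** L-P_2(R): limits, uniformly on compact subsets of Cpx^2, of real stable polynomials.
    (Every compact set lies in some closed polydisc |x|,|y| <= r.) *)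
Definition LP2 (F : Cpx -> Cpx -> Cpx) : Prop :=
  exists (d : nat -> nat) (c : nat -> nat -> nat -> R),
    (forall m, real_stable (d m) (c m)) /\
    forall r eps, 0 < eps -> exists M, forall m, (M <= m)%nat ->
      forall x y, Cnorm x <= r -> Cnorm y <= r ->
        Cnorm (Csub (biv_eval (d m) (c m) x y) (F x y)) < eps.

Definition GT_term (lam : nat -> R) (x y : Cpx) (k : nat) : Cpx :=
  Cmul (CR (lam k / (2 ^ k * INR (fact k)))) (Cmul (hermite k x) (Cpow (Copp y) k)).

Definition is_symbol (lam : nat -> R) (G : Cpx -> Cpx -> Cpx) : Prop :=
  forall x y, exists s, Cseries_cv (GT_term lam x y) s /\
    G x y = Cmul (Cexp (Cmul (CR (/ 4)) (Cmul y y))) s.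

(* Main.v *)
Require Import Defs.
From Stdlib Require Import Reals Lra Lia Classical Arith List.
Open Scope R_scope.

Lemma Ceq z w : Re z = Re w -> Im z = Im w -> z = w.
Proof. destruct z, w; simpl; intros; subst; reflexivity. Qed.

Ltac cring := apply Ceq; simpl; ring.

Lemma Cmul_comm a b : Cmul a b = Cmul b a. Proof. cring. Qed.
Lemma Cmul_assoc a b c : Cmul a (Cmul b c) = Cmul (Cmul a b) c. Proof. cring. Qed.
Lemma Cpow_add z a b : Cpow z (a + b) = Cmul (Cpow z a) (Cpow z b).
Proof. induction a; simpl. cring. rewrite IHa. apply Cmul_assoc. Qed.
Lemma Cpow_mul_distr a b n : Cpow (Cmul a b) n = Cmul (Cpow a n) (Cpow b n).
Proof. induction n; simpl. cring. rewrite IHn. destruct a, b, (Cpow _ n), (Cpow _ n). cring. Qed.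
Lemma Cpow_twice z j : Cpow z (2 * j) = Cpow (Cmul z z) j.
Proof. induction j. reflexivity.
replace (2 * S j)%nat with (S (S (2 * j))) by lia. cbn [Cpow].
rewrite IHj. destruct z, (Cpow _ j). cring. Qed.
Lemma CR_mul a b : Cmul (CR a) (CR b) = CR (a * b). Proof. cring. Qed.
Lemma CR_pow a n : Cpow (CR a) n = CR (a ^ n).
Proof. induction n; simpl. reflexivity. rewrite IHn, CR_mul. reflexivity. Qed.

Fixpoint rsum (g : nat -> R) (n : nat) : R :=
  match n with O => 0 | S k => rsum g k + g k end.

Lemma Csum_CR g n : Csum (fun j => CR (g j)) n = CR (rsum g n).
Proof. induction n; simpl. reflexivity. rewrite IHn. cring. Qed.
Lemma Csum_ext f g n : (forall j, (j < n)%nat -> f j = g j) -> Csum f n = Csum g n.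
Proof. induction n; simpl; intros H. reflexivity. rewrite IHn, H; auto. Qed.
Lemma Cmul_Csum_l f n w : Cmul (Csum f n) w = Csum (fun j => Cmul (f j) w) n.
Proof. induction n; simpl. cring. rewrite <- IHn. destruct (Csum f n), (f n), w. cring. Qed.
Lemma rsum_scal c g n : c * rsum g n = rsum (fun j => c * g j) n.
Proof. induction n; simpl. ring. rewrite <- IHn. ring. Qed.
Lemma rsum_ge0 g n : (forall j, 0 <= g j) -> 0 <= rsum g n.
Proof. intro H; induction n; simpl. lra. specialize (H n). lra. Qed.
Lemma rsum_ge_term g n j : (forall j, 0 <= g j) -> (j < n)%nat -> g j <= rsum g n.
Proof. intros H; induction n; intros Hj. lia. simpl.
destruct (Nat.eq_dec j n). subst. pose proof (rsum_ge0 g n H). lra.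
assert (g j <= rsum g n) by (apply IHn; lia). specialize (H n). lra. Qed.
Lemma rsum_ge_two g n j : (forall j, 0 <= g j) -> (S j < n)%nat -> g j + g (S j) <= rsum g n.
Proof. intros H; induction n; intros Hj. lia. simpl.
destruct (Nat.eq_dec (S j) n). subst. simpl. pose proof (rsum_ge0 g j H). lra.
assert (g j + g (S j) <= rsum g n) by (apply IHn; lia). specialize (H n). lra. Qed.

Definition Ci : Cpx := mkC 0 1.
Definition Cmi : Cpx := mkC 0 (-1).

Definition hq (k j : nat) : R :=
  if Nat.leb (2 * j) k then 2 ^ (k - 2 * j) * INR (fact k) / (INR (fact j) * INR (fact (k - 2 * j))) else 0.

Lemma hq_ge0 k j : 0 <= hq k j.
Proof. unfold hq. destruct (Nat.leb (2*j) k). 2: lra.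
apply Rmult_le_pos. apply Rmult_le_pos. apply pow_le; lra. apply pos_INR.
apply Rlt_le, Rinv_0_lt_compat, Rmult_lt_0_compat; apply lt_0_INR, lt_O_fact. Qed.

Lemma hq_0 k : 0 < hq k 0.
Proof. unfold hq. simpl Nat.leb. 
apply Rmult_lt_0_compat. apply Rmult_lt_0_compat. apply pow_lt; lra. apply lt_0_INR, lt_O_fact.
apply Rinv_0_lt_compat, Rmult_lt_0_compat; apply lt_0_INR, lt_O_fact. Qed.

Lemma herm_val k s : Cmul (hermite k (Copp Ci)) (Cpow (Copp (mkC 0 s)) k)
  = CR ((-s) ^ k * rsum (hq k) (S k)).
Proof.
unfold hermite. rewrite Cmul_Csum_l, rsum_scal, <- Csum_CR.
apply Csum_ext. intros j Hj. unfold hq.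
destruct (Nat.leb (2 * j) k) eqn:E. 2: cring.
apply Nat.leb_le in E.
set (m := (k - 2 * j)%nat).
replace (Cpow (Copp (mkC 0 s)) k) with (Cpow (Copp (mkC 0 s)) (m + 2 * j)) by (f_equal; unfold m; lia).
rewrite Cpow_add, Cpow_twice.
set (w := Copp (mkC 0 s)).
set (A := Cmul (CR 2) (Copp Ci)).
set (cf := (-1) ^ j * INR (fact k) / (INR (fact j) * INR (fact m))).
set (K := INR (fact k) / (INR (fact j) * INR (fact m))).
assert (HA : Cmul A w = CR (2 * (- s))) by (unfold A, w; cring).
assert (Hw : Cmul w w = CR ((-1) * (s * s))) by (unfold w; cring).
transitivity (Cmul (CR cf) (Cmul (Cpow (Cmul A w) m) (Cpow (Cmul w w) j))).
{ rewrite (Cpow_mul_distr A w m). destruct (Cpow A m), (Cpow w m), (Cpow (Cmul w w) j). cring. }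
rewrite HA, Hw, !CR_pow, !CR_mul. f_equal.
replace k with (m + 2 * j)%nat at 1 by (unfold m; lia).
unfold cf. rewrite !Rpow_mult_distr, pow_add, pow_mult.
replace ((-s)^2) with (s * s) by ring.
replace ((s*s)^j) with (s^j*s^j) by (symmetry; apply Rpow_mult_distr).
assert (Hu : (-1)^j * (-1)^j = 1) by (rewrite <- Rpow_mult_distr; replace (-1 * -1) with 1 by ring; apply pow1).
transitivity (((-1)^j*(-1)^j) * ((- s) ^ m * (s ^ j * s ^ j) * (2 ^ m * INR (fact k) / (INR (fact j) * INR (fact m))))).
unfold Rdiv; ring. rewrite Hu; ring.
Qed.

Definition bcoef (lam : nat -> R) k := lam k / (2 ^ k * INR (fact k)) * rsum (hq k) (S k).

Lemma GT_val lam s k : GT_term lam (Copp Ci) (mkC 0 s) k = CR ((-s)^k * bcoef lam k).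
Proof. unfold GT_term. rewrite herm_val, CR_mul. f_equal. unfold bcoef. ring. Qed.

Lemma rsum_hq_pos k : 0 < rsum (hq k) (S k).
Proof. pose proof (rsum_ge_term (hq k) (S k) 0 (hq_ge0 k)). pose proof (hq_0 k). 
assert (0 < S k)%nat by lia. specialize (H H1). lra. Qed.

Lemma fact_pos_R k : 0 < 2 ^ k * INR (fact k).
Proof. apply Rmult_lt_0_compat. apply pow_lt; lra. apply lt_0_INR, lt_O_fact. Qed.

Lemma bcoef_ge0 lam k : 0 <= lam k -> 0 <= bcoef lam k.
Proof. intro H. unfold bcoef. apply Rmult_le_pos. unfold Rdiv. apply Rmult_le_pos. auto.
apply Rlt_le, Rinv_0_lt_compat, fact_pos_R. apply Rlt_le, rsum_hq_pos. Qed.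
Lemma bcoef_pos lam k : 0 < lam k -> 0 < bcoef lam k.
Proof. intro H. unfold bcoef. apply Rmult_lt_0_compat. unfold Rdiv. apply Rmult_lt_0_compat. auto.
apply Rinv_0_lt_compat, fact_pos_R. apply rsum_hq_pos. Qed.

Lemma abs_le_norm a b : Rabs a <= sqrt (a * a + b * b).
Proof. rewrite <- sqrt_Rsqr_abs. apply sqrt_le_1_alt. unfold Rsqr. nra. Qed.

Lemma cv_ext a b s : (forall k, a k = b k) -> Cseries_cv a s -> Cseries_cv b s.
Proof. intros H Hc eps He. destruct (Hc eps He) as [N HN]. exists N. intros n Hn.
rewrite (Csum_ext b a n) by (intros; auto). auto. Qed.

Lemma series_real u s : Cseries_cv (fun k => CR (u k)) s -> Im s = 0 /\
  (forall eps, 0 < eps -> exists N, forall n, (N <= n)%nat -> Rabs (rsum u n - Re s) < eps).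
Proof. intros Hc. split.
- destruct (Req_dec (Im s) 0) as [h0|h0]; auto. exfalso.
  assert (h : 0 < Rabs (Im s)) by (apply Rabs_pos_lt; auto).
  destruct (Hc _ h) as [N HN]. specialize (HN N (Nat.le_refl N)).
  rewrite Csum_CR in HN. unfold Cnorm, Csub, Cadd, Copp in HN; simpl in HN.
  pose proof (abs_le_norm (0 + - Im s) (rsum u N + - Re s)) as H.
  replace (0 + - Im s) with (- Im s) in H by ring. rewrite Rabs_Ropp in H.
  replace (- Im s * - Im s + (rsum u N + - Re s) * (rsum u N + - Re s)) with
    ((rsum u N + - Re s) * (rsum u N + - Re s) + (0 + - Im s) * (0 + - Im s)) in H by ring.
  lra.
- intros eps He. destruct (Hc _ He) as [N HN]. exists N. intros n Hn. specialize (HN n Hn).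
  rewrite Csum_CR in HN. unfold Cnorm, Csub, Cadd, Copp in HN; simpl in HN.
  pose proof (abs_le_norm (rsum u n + - Re s) (0 + - Im s)). unfold Rminus. lra.
Qed.

Lemma lim_comb u v U V c a N0 :
  (forall eps, 0 < eps -> exists N, forall n, (N <= n)%nat -> Rabs (u n - U) < eps) ->
  (forall eps, 0 < eps -> exists N, forall n, (N <= n)%nat -> Rabs (v n - V) < eps) ->
  (a = 1 \/ a = -1) ->
  (forall n, (N0 <= n)%nat -> c <= u n + a * v n) -> c <= U + a * V.
Proof. intros Hu Hv Ha Hc. destruct (Rle_lt_dec c (U + a * V)) as [h|h]; auto. exfalso.
set (d := (c - (U + a*V)) / 2). assert (0 < d) by (unfold d; lra).
destruct (Hu d H) as [N1 H1]. destruct (Hv d H) as [N2 H2].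
set (n := (N0 + N1 + N2)%nat).
specialize (H1 n ltac:(unfold n; lia)). specialize (H2 n ltac:(unfold n; lia)). specialize (Hc n ltac:(unfold n; lia)).
apply Rabs_def2 in H1. apply Rabs_def2 in H2. destruct Ha; subst a; unfold d in *; lra. Qed.

Lemma rsum_lin g h a n : rsum (fun k => g k + a * h k) n = rsum g n + a * rsum h n.
Proof. induction n; simpl. ring. rewrite IHn. ring. Qed.
Lemma rsum_ext g h n : (forall k, g k = h k) -> rsum g n = rsum h n.
Proof. intro H; induction n; simpl. auto. rewrite IHn, H. auto. Qed.

Lemma pow_m1_bound k : -1 <= (-1)^k <= 1.
Proof. induction k; simpl; lra. Qed.

Lemma alt_strict (b : nat -> R) n L1 L2 :
  (forall k, 0 <= b k) -> 0 < b n -> 0 < b (S n) ->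
  (forall eps, 0 < eps -> exists N, forall m, (N <= m)%nat -> Rabs (rsum (fun k => (-1)^k * b k) m - L1) < eps) ->
  (forall eps, 0 < eps -> exists N, forall m, (N <= m)%nat -> Rabs (rsum b m - L2) < eps) ->
  Rabs L1 < L2.
Proof. intros Hb Hn Hsn H1 H2.
set (mu := Rmin (b n) (b (S n))).
assert (Hmu : 0 < mu) by (unfold mu; apply Rmin_glb_lt; auto).
assert (mu <= b n /\ mu <= b (S n)) as [m1 m2] by (unfold mu; split; [apply Rmin_l | apply Rmin_r]).
pose proof (pow_m1_bound n) as Hs.
assert (HS : (-1)^(S n) = - (-1)^n) by (simpl; ring).
assert (A : 2 * mu <= L2 + (-1) * L1).
{ apply (lim_comb _ _ L2 L1 _ (-1) (S (S n)) H2 H1). right; auto.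
  intros m Hm. rewrite <- rsum_lin.
  set (e := fun k => b k + -1 * ((-1) ^ k * b k)).
  assert (He : forall k, 0 <= e k).
  { intro k. unfold e. pose proof (pow_m1_bound k). pose proof (Hb k). nra. }
  pose proof (rsum_ge_two e m n He ltac:(lia)). unfold e in H at 1 2. rewrite HS in H. nra. }
assert (B : 2 * mu <= L2 + 1 * L1).
{ apply (lim_comb _ _ L2 L1 _ 1 (S (S n)) H2 H1). left; auto.
  intros m Hm. rewrite <- rsum_lin.
  set (e := fun k => b k + 1 * ((-1) ^ k * b k)).
  assert (He : forall k, 0 <= e k).
  { intro k. unfold e. pose proof (pow_m1_bound k). pose proof (Hb k). nra. }
  pose proof (rsum_ge_two e m n He ltac:(lia)). unfold e in H at 1 2. rewrite HS in H. nra. }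
apply Rabs_def1; lra.
Qed.

Lemma Cnorm_real z : Im z = 0 -> Cnorm z = Rabs (Re z).
Proof. intro H. unfold Cnorm. rewrite H. rewrite <- sqrt_Rsqr_abs. f_equal. unfold Rsqr. ring. Qed.

Lemma Cnorm_add u v : Cnorm (Cadd u v) <= Cnorm u + Cnorm v.
Proof. destruct u as [a b], v as [c d]. unfold Cnorm; simpl.
set (nu := a*a+b*b). set (nv := c*c+d*d).
assert (Hu : 0 <= nu) by (unfold nu; nra). assert (Hv : 0 <= nv) by (unfold nv; nra).
pose proof (sqrt_pos nu). pose proof (sqrt_pos nv).
rewrite <- (sqrt_square (sqrt nu + sqrt nv)) by lra.
apply sqrt_le_1_alt.
assert (Hq : a*c+b*d <= sqrt nu * sqrt nv).
{ rewrite <- sqrt_mult by auto. apply Rle_trans with (Rabs (a*c+b*d)). apply Rle_abs.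
  rewrite <- sqrt_Rsqr_abs. apply sqrt_le_1_alt. unfold Rsqr, nu, nv.
  assert ((a*a+b*b)*(c*c+d*d) - (a*c+b*d)*(a*c+b*d) = (a*d-b*c)*(a*d-b*c)) by ring.
  pose proof (Rle_0_sqr (a*d-b*c)). unfold Rsqr in *. lra. }
pose proof (sqrt_sqrt nu Hu). pose proof (sqrt_sqrt nv Hv).
replace ((a + c) * (a + c) + (b + d) * (b + d)) with (nu + nv + 2 * (a*c+b*d)) by (unfold nu, nv; ring).
set (p := sqrt nu) in *. set (q := sqrt nv) in *. nra. Qed.

Lemma Cnorm_opp z : Cnorm (Copp z) = Cnorm z.
Proof. unfold Cnorm; destruct z; simpl. f_equal. ring. Qed.

Lemma Cnorm_diff a b : Cnorm a <= Cnorm b + Cnorm (Csub a b) /\ Cnorm b <= Cnorm a + Cnorm (Csub a b).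
Proof. split.
- replace a with (Cadd b (Csub a b)) at 1 by (destruct a, b; cring). apply Cnorm_add.
- replace b with (Cadd a (Copp (Csub a b))) at 1 by (destruct a, b; cring).
  rewrite <- (Cnorm_opp (Csub a b)). apply Cnorm_add. Qed.

Lemma Cexp_val y : Cmul y y = CR (-1) -> Cexp (Cmul (CR (/4)) (Cmul y y)) = CR (exp (- / 4)).
Proof. intro H. rewrite H, CR_mul. unfold Cexp, CR; simpl. rewrite cos_0, sin_0.
apply Ceq; simpl. replace (/4 * -1) with (-/4) by ring. ring. ring. Qed.

Lemma F_vals lam G s : (forall k, 0 <= lam k) -> is_symbol lam G -> s * s = 1 ->
  exists v, (forall eps, 0 < eps -> exists N, forall m, (N <= m)%nat ->
      Rabs (rsum (fun k => (-s)^k * bcoef lam k) m - v) < eps) /\ Cnorm (G (Copp Ci) (mkC 0 s)) = exp (- / 4) * Rabs v.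
Proof. intros Hnn HG Hs.
destruct (HG (Copp Ci) (mkC 0 s)) as [S [Hc HGe]].
apply (cv_ext _ (fun k => CR ((-s)^k * bcoef lam k))) in Hc.
2: { intro k. apply GT_val. }
apply series_real in Hc. destruct Hc as [HIm Hcv].
exists (Re S). split; auto.
rewrite HGe, Cexp_val.
2: { apply Ceq; simpl; lra. }
rewrite Cnorm_real. simpl. rewrite HIm. replace (exp (- / 4) * Re S - 0 * 0) with (exp (- / 4) * Re S) by ring. rewrite Rabs_mult, (Rabs_pos_eq (exp _)).
reflexivity. apply Rlt_le, exp_pos. simpl. rewrite HIm. ring. Qed.

Lemma conv_ext f g v : (forall k, f k = g k) ->
  (forall eps, 0 < eps -> exists N, forall m, (N <= m)%nat -> Rabs (rsum f m - v) < eps) ->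
  (forall eps, 0 < eps -> exists N, forall m, (N <= m)%nat -> Rabs (rsum g m - v) < eps).
Proof. intros H Hc eps He. destruct (Hc eps He) as [N HN]. exists N. intros m Hm.
rewrite <- (rsum_ext f g m H). auto. Qed.

Lemma main_core lam G : (forall k, 0 <= lam k) -> is_symbol lam G ->
  (exists n, 0 < lam n /\ 0 < lam (S n)) ->
  Cnorm (G (Copp Ci) Ci) < Cnorm (G (Copp Ci) Cmi).
Proof. intros Hnn HG [n [H1 H2]].
destruct (F_vals lam G 1 Hnn HG ltac:(ring)) as [v1 [C1 E1]].
destruct (F_vals lam G (-1) Hnn HG ltac:(ring)) as [v2 [C2 E2]].
change (mkC 0 1) with Ci in E1. change (mkC 0 (-1)) with Cmi in E2.
rewrite E1, E2.
assert (C1' := conv_ext (fun k => (Ropp 1)^k * bcoef lam k) (fun k => (-1)^k * bcoef lam k) v1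
  ltac:(intro k; replace (Ropp 1) with (-1) by ring; reflexivity) C1).
assert (C2' := conv_ext (fun k => (Ropp (-1))^k * bcoef lam k) (bcoef lam) v2
  ltac:(intro k; replace (Ropp (-1)) with 1 by ring; rewrite pow1; ring) C2).
assert (Rabs v1 < v2).
{ apply (alt_strict (bcoef lam) n); auto. intro k; apply bcoef_ge0; auto.
  apply bcoef_pos; auto. apply bcoef_pos; auto. }
pose proof (Rle_abs v2). pose proof (exp_pos (-/4)).
apply Rmult_lt_compat_l; auto. lra. Qed.



Lemma min_exists (P : nat -> Prop) : (exists n, P n) -> exists n, P n /\ forall m, (m < n)%nat -> ~ P m.
Proof. intros [n Hn]. revert Hn. induction n as [n IH] using (well_founded_induction lt_wf). intro Hn.
destruct (classic (exists m, (m < n)%nat /\ P m)) as [[m [Hm Pm]]|Hno].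
- apply (IH m Hm Pm).
- exists n; split; auto. intros m Hm Pm; apply Hno; eauto. Qed.

Lemma Cmul_zero a b : Cmul a b = Defs.C0 -> a = Defs.C0 \/ b = Defs.C0.
Proof. destruct a as [a1 a2], b as [b1 b2]. unfold Cmul, Defs.C0; simpl. intro H. injection H as H1 H2.
assert (E : (a1*a1+a2*a2)*(b1*b1+b2*b2) = (a1*b1-a2*b2)*(a1*b1-a2*b2) + (a1*b2+a2*b1)*(a1*b2+a2*b1)) by ring.
rewrite H1, H2 in E. replace (0*0+0*0) with 0 in E by ring.
apply Rmult_integral in E. destruct E as [E|E]; [left|right];
 (assert (X: forall x y, x*x+y*y = 0 -> x = 0 /\ y = 0) by (intros x y Hxy; split; nra));
 destruct (X _ _ E); subst; reflexivity. Qed.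

Lemma Cpow_zero z n : Cpow z n = Defs.C0 -> z = Defs.C0.
Proof. induction n; simpl; intro H. unfold Defs.C1, Defs.C0 in H. injection H; lra.
destruct (Cmul_zero _ _ H); auto. Qed.

Fixpoint ladd (l1 l2 : list R) : list R :=
  match l1, l2 with nil, _ => l2 | _, nil => l1 | a :: t1, b :: t2 => (a + b) :: ladd t1 t2 end.
Fixpoint bl (m : nat) : list R := match m with O => 1 :: nil | S k => ladd (bl k) (0 :: bl k) end.

Lemma peval_ladd l1 l2 z : peval (ladd l1 l2) z = Cadd (peval l1 z) (peval l2 z).
Proof. revert l2; induction l1; intros l2; destruct l2; simpl; try cring.
rewrite IHl1. destruct (peval l1 z), (peval l2 z), z. cring. Qed.

Lemma peval_cons0 l z : peval (0 :: l) z = Cmul z (peval l z).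
Proof. simpl. destruct (peval l z), z. cring. Qed.

Lemma peval_bl m z : peval (bl m) z = Cpow (Cadd Defs.C1 z) m.
Proof. induction m; simpl. destruct z; cring. rewrite peval_ladd, peval_cons0, IHm.
destruct (Cpow _ m), z. cring. Qed.

Lemma nth_ladd l1 l2 j : nth j (ladd l1 l2) 0 = nth j l1 0 + nth j l2 0.
Proof. revert l2 j; induction l1; intros l2 j; destruct l2, j; simpl; try ring; try apply IHl1. Qed.

Lemma bl_0 m : nth 0 (bl m) 0 = 1.
Proof. induction m; simpl. auto. rewrite nth_ladd, IHm. simpl. ring. Qed.
Lemma bl_big m j : (m < j)%nat -> nth j (bl m) 0 = 0.
Proof. revert j; induction m; intros j Hj; simpl.
destruct j. lia. destruct j; auto.
rewrite nth_ladd. destruct j. lia. simpl. rewrite !IHm by lia. ring. Qed.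
Lemma bl_m m : nth m (bl m) 0 = 1.
Proof. induction m; simpl. auto. rewrite nth_ladd. simpl. rewrite IHm, bl_big by lia. ring. Qed.

Lemma peval_zeros l z : (forall j, nth j l 0 = 0) -> peval l z = Defs.C0.
Proof. induction l; simpl; intro H. auto. rewrite IHl. specialize (H 0%nat). simpl in H. subst. cring.
intro j; apply (H (S j)). Qed.

Lemma peval_nth l1 l2 z : (forall j, nth j l1 0 = nth j l2 0) -> peval l1 z = peval l2 z.
Proof. revert l2; induction l1 as [|a l1 IH]; intros l2 H.
- symmetry. apply peval_zeros. intro j; rewrite <- H. destruct j; auto.
- destruct l2 as [|b l2].
  + apply peval_zeros. intro j; rewrite H. destruct j; auto.
  + simpl. rewrite (IH l2). f_equal. f_equal. apply (H 0%nat). intro j; apply (H (S j)). Qed.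

Lemma apply_nth lam n l j : nth j (apply_seq_from lam n l) 0 = lam (n + j)%nat * nth j l 0.
Proof. revert n j; induction l; intros n j; destruct j; simpl; try ring;
 try (rewrite Nat.add_0_r; reflexivity); try (rewrite IHl; f_equal; f_equal; lia). Qed.

Lemma nth_prefix p l j : nth j (repeat 0 p ++ l) 0 = if Nat.ltb j p then 0 else nth (j - p) l 0.
Proof. revert j; induction p; intros j; simpl. rewrite Nat.sub_0_r. auto.
destruct j; simpl; auto. Qed.

Lemma peval_prefix p l z : peval (repeat 0 p ++ l) z = Cmul (Cpow z p) (peval l z).
Proof. induction p; simpl. destruct (peval l z); cring.
rewrite IHp. destruct (Cpow z p), (peval l z), z. cring. Qed.

Lemma de_moivre t n : Cpow (mkC (cos t) (sin t)) n = mkC (cos (INR n * t)) (sin (INR n * t)).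
Proof. induction n; simpl Cpow. simpl INR. rewrite Rmult_0_l, cos_0, sin_0. reflexivity.
rewrite IHn, S_INR. replace ((INR n + 1) * t) with (t + INR n * t) by ring.
rewrite cos_plus, sin_plus. cring. Qed.

Lemma gap_contra lam p m : multiplier_sequence lam -> (2 <= m)%nat -> 0 < lam p -> 0 < lam (p + m)%nat ->
  (forall j, (0 < j < m)%nat -> lam (p + j)%nat = 0) -> False.
Proof. intros Hms Hm Hp Hpm Hz.
set (L := repeat 0 p ++ bl m).
set (T := repeat 0 p ++ (lam p :: repeat 0 (m - 1) ++ (lam (p + m)%nat :: nil))).
assert (HT : forall j, nth j (apply_seq lam L) 0 = nth j T 0).
{ intro j. unfold apply_seq. rewrite apply_nth. unfold L, T. rewrite !nth_prefix.
  destruct (Nat.ltb j p) eqn:E. ring.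
  apply Nat.ltb_ge in E. simpl Nat.add.
  destruct (Nat.sub j p) eqn:E2. simpl. rewrite bl_0. replace j with p by lia. ring.
  simpl. rewrite nth_prefix. destruct (Nat.ltb n (m - 1)) eqn:E3.
  - apply Nat.ltb_lt in E3. replace j with (p + S n)%nat by lia. rewrite Hz by lia. ring.
  - apply Nat.ltb_ge in E3. destruct (Nat.eq_dec n (m - 1)).
    + replace (n - (m-1))%nat with 0%nat by lia. simpl. replace j with (p + m)%nat by lia.
      replace (S n) with m by lia. rewrite bl_m. ring.
    + replace (n - (m-1))%nat with (S (n - m))%nat by lia. simpl. rewrite bl_big by lia.
      destruct (n - m)%nat; simpl; ring. }
assert (HL : real_rooted L).
{ right. intros z Hz0. unfold L in Hz0. rewrite peval_prefix, peval_bl in Hz0.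
  destruct (Cmul_zero _ _ Hz0) as [H|H]; apply Cpow_zero in H.
  - subst. reflexivity.
  - destruct z. unfold Defs.C1, Cadd, Defs.C0 in H. simpl in H. injection H. intros. simpl. lra. }
specialize (Hms L HL). destruct Hms as [Hall|Hroot].
- assert (nth p (apply_seq lam L) 0 = 0).
  { destruct (nth_in_or_default p (apply_seq lam L) 0) as [Hi|Hi]. apply Hall; auto. auto. }
  rewrite HT in H. unfold T in H. rewrite nth_prefix in H. rewrite Nat.ltb_irrefl, Nat.sub_diag in H.
  simpl in H. lra.
- set (x := lam p / lam (p + m)%nat). assert (Hx : 0 < x) by (unfold x; apply Rdiv_lt_0_compat; auto).
  set (rho := Rpower x (/ INR m)).
  assert (Hmr : 0 < INR m) by (apply lt_0_INR; lia).
  assert (Hrho : 0 < rho) by (unfold rho, Rpower; apply exp_pos).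
  assert (Hrm : rho ^ m = x).
  { rewrite <- Rpower_pow by auto. unfold rho. rewrite Rpower_mult.
    replace (/ INR m * INR m) with 1 by (field; lra). apply Rpower_1; auto. }
  set (t := PI / INR m).
  assert (Hmt : INR m * t = PI) by (unfold t; field; lra).
  assert (Hst : 0 < sin t).
  { apply sin_gt_0. unfold t. apply Rdiv_lt_0_compat; auto. apply PI_RGT_0.
    unfold t. assert (2 <= INR m) by (replace 2 with (INR 2) by (simpl; ring); apply le_INR; auto).
    pose proof PI_RGT_0. apply (Rmult_lt_reg_r (INR m)); auto. unfold Rdiv. rewrite Rmult_assoc, Rinv_l by lra. nra. }
  set (z0 := Cmul (CR rho) (mkC (cos t) (sin t))).
  assert (Him : Im z0 = 0).
  { apply Hroot. rewrite (peval_nth _ T) by auto. unfold T. rewrite peval_prefix.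
    replace (peval (lam p :: repeat 0 (m - 1) ++ lam (p + m)%nat :: nil) z0) with Defs.C0. cring.
    replace (lam p :: repeat 0 (m - 1) ++ lam (p + m)%nat :: nil) with
      (ladd (lam p :: nil) (repeat 0 m ++ lam (p + m)%nat :: nil)).
    2: { destruct m. lia. simpl. rewrite Nat.sub_0_r. f_equal. ring. }
    rewrite peval_ladd, peval_prefix. unfold z0. rewrite Cpow_mul_distr, de_moivre, Hmt, CR_pow, Hrm.
    rewrite cos_PI, sin_PI. apply Ceq; simpl; unfold x; field; lra. }
  unfold z0 in Him. simpl in Him. nra.
Qed.

Lemma contig lam : multiplier_sequence lam -> ~ trivial_seq lam -> (forall n, 0 <= lam n) ->
  exists n, 0 < lam n /\ 0 < lam (S n).
Proof. intros Hms Hnt Hnn.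
assert (Hex : exists n, 0 < lam n).
{ apply NNPP. intro H. apply Hnt. exists 0%nat. intros n _ _.
  destruct (Hnn n) as [h|h]; auto. exfalso; apply H; eauto. }
destruct (min_exists _ Hex) as [p [Hp Hpmin]].
assert (Hbelow : forall k, (k < p)%nat -> lam k = 0).
{ intros k Hk. destruct (Hnn k) as [h|h]; auto. exfalso; apply (Hpmin k Hk h). }
assert (Hn : exists n, (p < n)%nat /\ 0 < lam n /\ n <> S p).
{ apply NNPP. intro H. apply Hnt. exists p. intros n H1 H2.
  destruct (Hnn n) as [h|h]; auto. exfalso.
  destruct (Nat.lt_total n p) as [h1|[h1|h1]]. rewrite Hbelow in h; auto; lra. auto.
  apply H; eauto. }
destruct (classic (0 < lam (S p))) as [Hsp|Hsp]. eauto.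
exfalso.
destruct Hn as [n [Hn1 [Hn2 Hn3]]].
destruct (min_exists (fun q => (p < q)%nat /\ 0 < lam q)) as [q [[Hq1 Hq2] Hqmin]]. eauto.
assert (q <> S p) by (intro; subst; auto).
apply (gap_contra lam p (q - p) Hms). lia. auto. replace (p + (q - p))%nat with q by lia. auto.
intros j Hj. destruct (Hnn (p + j)%nat) as [h|h]; auto. exfalso.
apply (Hqmin (p + j)%nat). lia. split; auto. lia.
Qed.

From HB Require Import structures.
From mathcomp Require Import all_boot all_order all_algebra.
From mathcomp Require Import Rstruct.
From mathcomp Require Import complex.
Import GRing.Theory Num.Theory.
Section MC.
Local Open Scope ring_scope.

Definition phi (z : Cpx) : R[i] := Complex (Defs.Re z) (Defs.Im z).
Definition n2 (z : R[i]) : R := Rplus (Rmult (complex.Re z) (complex.Re z)) (Rmult (complex.Im z) (complex.Im z)).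

Lemma phi_add z w : phi (Cadd z w) = phi z + phi w.
Proof. by case: z; case: w. Qed.
Lemma phi_mul z w : phi (Cmul z w) = phi z * phi w.
Proof. by case: z; case: w. Qed.
Lemma phi_pow z n : phi (Cpow z n) = phi z ^+ n.
Proof. elim: n => [|n IH] /=; first by []. by rewrite phi_mul IH exprS. Qed.
Lemma phi_sum f n : phi (Csum f n) = \sum_(j < n) phi (f j).
Proof. elim: n => [|n IH] /=; first by rewrite big_ord0.
by rewrite phi_add IH big_ord_recr. Qed.
Lemma n2M x y : n2 (x * y) = Rmult (n2 x) (n2 y).
Proof. case: x => a b; case: y => c d; rewrite /n2 /=.
rewrite -!RplusE -!RmultE -?RoppE. ring.
Qed.

Lemma n2_ge0 z : Rle 0 (n2 z).
Proof. rewrite /n2. apply: Rplus_le_le_0_compat; apply: Rle_0_sqr. Qed.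

Lemma phi_inj z : phi z = 0 -> z = C0.
Proof. case: z => a b; rewrite /phi /= => -[-> ->]. by []. Qed.


Definition gp (d : nat) (c : nat -> nat -> R) (x0 : Cpx) : {poly R[i]} :=
  \sum_(i < d.+1) \sum_(j < d.+1) (phi (CR (c i j)) * phi x0 ^+ i) *: 'X^j.

Lemma gp_horner d c x0 y : (gp d c x0).[phi y] = phi (biv_eval d c x0 y).
Proof.
rewrite /biv_eval phi_sum horner_sum; apply: eq_bigr => i _.
rewrite phi_sum horner_sum; apply: eq_bigr => j _.
by rewrite hornerZ hornerXn !phi_mul !phi_pow mulrA.
Qed.

Lemma factor_ineq (z : R[i]) : Rle (complex.Im z) 0 ->
  Rle (n2 (phi Cmi - z)) (n2 (phi Ci - z)).
Proof.
case: z => a b /= hb; rewrite /n2 /=.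
rewrite -?RplusE -?RmultE -?RoppE.
assert (Rminus (Rmult (Rplus 1 (Ropp b)) (Rplus 1 (Ropp b))) (Rmult (Rplus (Ropp 1) (Ropp b)) (Rplus (Ropp 1) (Ropp b))) = Rmult (-4) b) by ring.
lra.
Qed.

Lemma prod_ineq (r : seq R[i]) : (forall z, z \in r -> Rle (complex.Im z) 0) ->
  Rle (n2 (\prod_(z <- r) (phi Cmi - z))) (n2 (\prod_(z <- r) (phi Ci - z))).
Proof.
elim: r => [|x r IH] Hr; first by rewrite !big_nil; apply: Rle_refl.
rewrite !big_cons !n2M; apply: Rmult_le_compat; try apply: n2_ge0.
  by apply: factor_ineq; apply: Hr; rewrite inE eqxx.
by apply: IH => z Hz; apply: Hr; rewrite inE Hz orbT.
Qed.

Lemma stab_ineq d c : real_stable d c ->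
  Rle (Cnorm (biv_eval d c Ci Cmi)) (Cnorm (biv_eval d c Ci Ci)).
Proof.
move=> Hs.
suff H : Rle (n2 (phi (biv_eval d c Ci Cmi))) (n2 (phi (biv_eval d c Ci Ci))).
  by apply: sqrt_le_1_alt.
rewrite -!gp_horner.
set p := gp d c Ci.
have Hroot : forall z : R[i], root p z -> Rle (complex.Im z) 0.
  move=> [a b] /rootP Hz /=. apply: Rnot_lt_le => hb.
  apply: (Hs Ci (mkC a b)) => //=; first by apply: Rlt_0_1.
  apply: phi_inj. by rewrite -gp_horner.
have [r Hr] := closed_field_poly_normal p.
have [->|pnz] := eqVneq p 0; first by rewrite !horner0; apply: Rle_refl.
rewrite Hr !hornerZ !horner_prod !n2M.
apply: Rmult_le_compat_l; first by apply: n2_ge0.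
have -> : \prod_(i <- r) ('X - i%:P).[phi Cmi] = \prod_(i <- r) (phi Cmi - i).
  by apply: eq_bigr => i _; rewrite hornerXsubC.
have -> : \prod_(i <- r) ('X - i%:P).[phi Ci] = \prod_(i <- r) (phi Ci - i).
  by apply: eq_bigr => i _; rewrite hornerXsubC.
apply: prod_ineq => z Hz; apply: Hroot.
apply/rootP; rewrite Hr hornerZ horner_prod (big_rem z Hz) /=.
by rewrite hornerXsubC subrr mul0r mulr0.
Qed.

End MC.

Open Scope R_scope.

Lemma Cnorm_Ci : Cnorm Ci <= 1.
Proof. unfold Cnorm, Ci; simpl. replace (0*0+1*1) with 1 by ring. rewrite sqrt_1. lra. Qed.
Lemma Cnorm_Cmi : Cnorm Cmi <= 1.
Proof. unfold Cnorm, Cmi; simpl. replace (0*0+ -1 * -1) with 1 by ring. rewrite sqrt_1. lra. Qed.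

Theorem mainTheorem9 (lam : nat -> R)
  (Hms : multiplier_sequence lam)
  (Hnontriv : ~ trivial_seq lam)
  (Hnonneg : forall n, 0 <= lam n)
  (G : Cpx -> Cpx -> Cpx) (HG : is_symbol lam G) :
  ~ LP2 (fun x y => G (Copp x) y).
Proof.
intros [d [c [Hst Hcv]]].
pose proof (main_core lam G Hnonneg HG (contig lam Hms Hnontriv Hnonneg)) as Hlt.
set (N1 := Cnorm (G (Copp Ci) Ci)) in *. set (N2 := Cnorm (G (Copp Ci) Cmi)) in *.
destruct (Hcv 1 ((N2 - N1) / 3) ltac:(lra)) as [M HM].
pose proof (HM M (Nat.le_refl M) Ci Ci Cnorm_Ci Cnorm_Ci) as H1.
pose proof (HM M (Nat.le_refl M) Ci Cmi Cnorm_Ci Cnorm_Cmi) as H2.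
simpl in H1, H2.
pose proof (stab_ineq (d M) (c M) (Hst M)) as H3.
destruct (Cnorm_diff (biv_eval (d M) (c M) Ci Ci) (G (Copp Ci) Ci)) as [D1 D2].
destruct (Cnorm_diff (biv_eval (d M) (c M) Ci Cmi) (G (Copp Ci) Cmi)) as [D3 D4].
fold N1 in D1, D2. fold N2 in D3, D4.
lra.
Qed.
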